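(* Let $\mathcal{T}$ be a locally compact, $\sigma$-compact Hausdorff space, $\mu$ a finite positive Radon measure on $\mathcal{T}$ with $\mu(\mathcal{T})>0$, $1\le p<\infty$ with conjugate $q$. For $\varepsilon>1$ let $S_\varepsilon^p=\{f\in L^q_\mu(\mathcal{T})\text{ real}:\|f\|_q\le\varepsilon,\ \int f\,d\mu=\mu(\mathcal{T})^{1/p}\}$ and $L^p(\mathcal{T})_\varepsilon^+=\{g\in L^p_\mu(\mathcal{T})\text{ real}:\int gf\,d\mu\ge0\ \forall f\in S_\varepsilon^p\}$, and let $L^p(\mathcal{T})_+$ be the $\mu$-a.e. nonnegative functions. If $L^p(\mathcal{T})_+\subseteq L^p(\mathcal{T})_\varepsilon^+$ for some $\varepsilon>1$, then $r_\mu=\inf\{\mu(E):E\ \mu\text{-measurable},\ \mu(E)>0\}>0$. *)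

(* Defs.v *)
From HB Require Import structures.
From mathcomp Require Import all_boot all_order all_algebra.
From mathcomp Require Import all_classical all_reals all_analysis.

Set Implicit Arguments.
Unset Strict Implicit.
Unset Printing Implicit Defensive.
Import Order.TTheory GRing.Theory Num.Theory.

Local Open Scope classical_set_scope.
Local Open Scope ring_scope.

(* The Borel sigma-algebra of a topological space T: the measurable type
   whose measurable sets are generated by the open sets of T.  The carrier
   is (convertibly) T itself. *)
Notation borel T := (g_sigma_algebraType (@open T)).

Definition sigma_compact (T : topologicalType) : Prop :=
  exists K : nat -> set T, (forall n, compact (K n)) /\ \bigcup_n K n = [set: T].

Definition radon (T : ptopologicalType) (R : realType)
    (mu : {measure set (borel T) -> \bar R}) : Prop :=
  [/\ (forall x : T, exists U : set T, [/\ open U, U x & (mu U < +oo)%E]),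
      (forall A : set (borel T), measurable A ->
         mu A = ereal_inf [set mu U | U in [set U : set T | open U /\ A `<=` U]])
    & (forall U : set T, open U ->
         mu U = ereal_sup [set mu K | K in [set K : set T | compact K /\ K `<=` U]])].

(* Real-valued L^r functions (representatives; all conditions below are
   invariant under mu-a.e. equality). *)
Definition inL (T : ptopologicalType) (R : realType)
    (mu : {measure set (borel T) -> \bar R}) (r : \bar R) (f : borel T -> R) : Prop :=
  measurable_fun [set: borel T] f /\ (Lnorm mu r (EFin \o f) < +oo)%E.

Definition S_eps (T : ptopologicalType) (R : realType)
    (mu : {measure set (borel T) -> \bar R}) (p eps : R) : set (borel T -> R) :=
  [set f | [/\ inL mu (hoelder_conjugate p%:E) f,
              (Lnorm mu (hoelder_conjugate p%:E) (EFin \o f) <= eps%:E)%E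
            & (\int[mu]_x (f x)%:E = (powR (fine (mu [set: borel T])) p^-1)%:E)%E]].

Definition Lp_eps_plus (T : ptopologicalType) (R : realType)
    (mu : {measure set (borel T) -> \bar R}) (p eps : R) : set (borel T -> R) :=
  [set g | inL mu p%:E g /\
     forall f, S_eps mu p eps f -> (0 <= \int[mu]_x (g x * f x)%:E)%E].

Definition Lp_plus (T : ptopologicalType) (R : realType)
    (mu : {measure set (borel T) -> \bar R}) (p : R) : set (borel T -> R) :=
  [set g | inL mu p%:E g /\ {ae mu, forall x, 0 <= g x}].

Definition r_mu (T : ptopologicalType) (R : realType)
    (mu : {measure set (borel T) -> \bar R}) : \bar R :=
  ereal_inf [set mu E | E in [set E : set (borel T) | measurable E /\ (0 < mu E)%E]].

(* Main.v *)
Require Import Defs.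
From HB Require Import structures.
From mathcomp Require Import all_boot all_order all_algebra.
From mathcomp Require Import all_classical all_reals all_analysis.
From mathcomp Require Import measurable_realfun ess_sup_inf.
From mathcomp Require Import ring lra.
Import Order.TTheory GRing.Theory Num.Theory.
Local Open Scope classical_set_scope.
Local Open Scope ring_scope.

Section gen.
Context d (T : measurableType d) (R : realType) (mu : {finite_measure set T -> \bar R}).
Local Open Scope ereal_scope.

Lemma int_lin (E : set T) (a b : R) : measurable E ->
  \int[mu]_x (a + b * \1_E x)%:E = a%:E * mu setT + b%:E * mu E.
Proof.
move=> mE.
have i1 : mu.-integrable setT (EFin \o cst a) by exact: finite_measure_integrable_cst.
have i2 : mu.-integrable setT (EFin \o (fun x => b * \1_E x)%R).
  have := integrableZl measurableT b (integrable_indic mu mE).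
  by apply: eq_integrable => // x _; rewrite /= EFinM.
rewrite (_ : (fun x => _) = (EFin \o cst a) \+ (EFin \o (fun x => b * \1_E x)%R)); last first.
  by apply/funext=> x; rewrite /= EFinD.
rewrite (integralD_EFin measurableT i1 i2).
rewrite (_ : (fun x => (EFin \o cst a) x) = cst a%:E) // integral_cst //.
under eq_integral do rewrite /= EFinM.
rewrite integralZl //; last exact: integrable_indic.
by rewrite integral_indic // setIT.
Qed.

Lemma Lnorm_le (r : R) (f h : T -> R) (H : R) : (0 < r)%R ->
  measurable_fun setT f -> measurable_fun setT h ->
  (forall x, `|f x| `^ r <= h x)%R ->
  \int[mu]_x (h x)%:E = H%:E ->
  'N[mu]_r%:E [EFin \o f] <= (H `^ r^-1)%:E.
Proof.
move=> r0 mf mh fh hH.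
rewrite unlock /=.
have I0 : 0 <= \int[mu]_x `|(f x)%:E| `^ r.
  by apply: integral_ge0 => x _; exact: poweR_ge0.
have IH : \int[mu]_x `|(f x)%:E| `^ r <= H%:E.
  rewrite -hH; apply: ge0_le_integral => //.
  - by move=> x _; exact: poweR_ge0.
  - have -> : (fun x => `|(f x)%:E| `^ r) = EFin \o (fun x => `|f x| `^ r)%R.
      by apply/funext => x; rewrite /= -poweR_EFin.
    apply/measurable_EFinP; apply: (@measurableT_comp _ _ _ _ _ _ (@powR R ^~ r)).
      exact: measurable_powR.
    exact: measurableT_comp.
  - exact/measurable_EFinP.
  - by move=> x _; rewrite /= -poweR_EFin lee_fin.
have Ifin : \int[mu]_x `|(f x)%:E| `^ r \is a fin_num.
  by rewrite ge0_fin_numE // (le_lt_trans IH) // ltry.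
rewrite -(fineK Ifin) poweR_EFin lee_fin ge0_ler_powR //.
- by rewrite invr_ge0 ltW.
- by rewrite nnegrE fine_ge0.
- rewrite nnegrE; have := le_trans I0 IH; by rewrite lee_fin.
- by rewrite -lee_fin fineK.
Qed.
End gen.

Lemma hc_real (R : realType) (p : R) : (1 < p)%R ->
  hoelder_conjugate p%:E = (p / (p - 1))%:E.
Proof.
move=> p1.
have p0 : p != 0%R by rewrite gt_eqF // (lt_trans ltr01).
have pm1 : (p - 1 != 0)%R by rewrite subr_eq0 gt_eqF.
rewrite /hoelder_conjugate /= eqe (negbTE p0) -EFinB inver (negbTE pm1).
by rewrite -EFinM.
Qed.

Theorem lemma5p4 (T : ptopologicalType) (R : realType)
    (mu : {finite_measure set (borel T) -> \bar R}) (p : R) :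
  locally_compact [set: T] -> sigma_compact T -> hausdorff_space T ->
  radon mu -> (0 < mu [set: borel T])%E -> 1 <= p ->
  (exists eps : R, 1 < eps /\ Lp_plus mu p `<=` Lp_eps_plus mu p eps) ->
  (0 < r_mu mu)%E.
Proof.
move=> _ _ _ _ muT0 p1 [eps [eps1 Hsub]].
rewrite ltNge; apply/negP => r0.
have muTfin : mu setT \is a fin_num by exact: fin_num_measure.
set M := fine (mu setT).
have muTE : mu setT = M%:E by rewrite fineK.
have M0 : (0 < M)%R by rewrite -lte_fin -muTE.
set A := M `^ p^-1.
have A0 : (0 < A)%R by exact: powR_gt0.
set q := hoelder_conjugate p%:E.
have key : exists2 δ : R, (0 < δ)%R & forall m : R, (0 < m)%R -> (m < δ)%R ->
   (m < M)%R /\ forall E : set (borel T), measurable E -> mu E = m%:E ->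
   ('N[mu]_q [EFin \o (fun x => (A+m)/(M-m) + (- ((A+m)/(M-m) + 1)) * \1_E x)%R]
      <= eps%:E)%E.
  have e0 : (0 < eps + 1)%R by lra.
  have [p_eq1|p1'] : p = 1%R \/ (1 < p)%R by move: p1; rewrite le_eqVlt => /orP[/eqP<-|]; [left|right].
  - have qE : q = +oo%E by rewrite /q p_eq1; exact: hoelder_conjugate1.
    have AM : A = M by rewrite /A p_eq1 invr1 powRr1 // ltW.
    exists ((eps - 1) * M / (eps + 1)).
      by rewrite divr_gt0 // mulr_gt0 // subr_gt0.
    move=> m m0 mδ.
    have h : (m * (eps + 1) < (eps - 1) * M)%R by rewrite -ltr_pdivlMr.
    have mM : (m < M)%R by nra.
    split => // E mE muE.
    rewrite qE unlock /= muT0.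
    apply/ess_supP; apply: aeW => x /=.
    rewrite indicE; case: (x \in E) => /=; rewrite lee_fin AM.
    + rewrite mulr1 (_ : _ + _ = -1)%R; last ring.
      by rewrite normrN1 ltW.
    + rewrite mulr0 addr0 ger0_norm; last by rewrite divr_ge0 // ?subr_ge0 ltW // ?addr_gt0.
      rewrite ler_pdivrMr ?subr_gt0 //; nra.
  - set qr := (p / (p - 1))%R.
    have qE : q = qr%:E by exact: hc_real.
    have qr0 : (0 < qr)%R by rewrite divr_gt0 ?subr_gt0 // (lt_trans ltr01).
    set c := eps `^ qr.
    have c1 : (1 < c)%R.
      have := @gt0_ltr_powR R qr qr0 1 eps; rewrite powR1; apply; rewrite ?nnegrE //.
      by rewrite ltW // (lt_trans ltr01).
    set γ := ((c + 1) / 2) `^ qr^-1.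
    have γ1 : (1 < γ)%R.
      have qi0 : (0 < qr^-1)%R by rewrite invr_gt0.
      have := @gt0_ltr_powR R qr^-1 qi0 1 ((c + 1) / 2); rewrite powR1; apply; rewrite ?nnegrE //.
      - lra.
      - lra.
    have γq : γ `^ qr = ((c + 1) / 2)%R by rewrite /γ -powRrM mulVf ?gt_eqF // powRr1 //; lra.
    have AMq : ((A / M) `^ qr * M = 1)%R.
      have -> : (A / M = M `^ (p^-1 - 1))%R.
        rewrite powRB ?(gt_eqF M0) ?implybT //.
        by rewrite powRr1 // ltW.
      rewrite -powRrM.
      have -> : ((p^-1 - 1) * qr = -1)%R.
        rewrite /qr; field.
        by rewrite subr_eq0 gt_eqF //= gt_eqF // (lt_trans ltr01).
      by rewrite powR_inv1 ?ltW // mulVf // gt_eqF.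
    have gA0 : (0 < M + γ * A)%R by rewrite addr_gt0 // mulr_gt0 // (lt_trans ltr01).
    exists (Num.min ((c - 1) / 2) ((γ - 1) * A * M / (M + γ * A)))%R.
      rewrite lt_min; apply/andP; split; first lra.
      by rewrite divr_gt0 // !mulr_gt0 // subr_gt0.
    move=> m m0; rewrite lt_min => /andP [mc mg].
    have h : (m * (M + γ * A) < (γ - 1) * A * M)%R by rewrite -ltr_pdivlMr.
    have mM : (m < M)%R.
      rewrite ltNge; apply/negP => Mm.
      have := ler_wpM2r (ltW gA0) Mm.
      have := mulr_gt0 M0 A0; have := mulr_gt0 M0 M0; nra.
    split => // E mE muE.
    set α := ((A + m) / (M - m))%R.
    have α0 : (0 < α)%R by rewrite divr_gt0 ?subr_gt0 // addr_gt0.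
    rewrite qE.
    apply: (le_trans (@Lnorm_le _ _ _ mu qr _ (fun x => α `^ qr + 1 * \1_E x)%R (α `^ qr * M + 1 * m)%R qr0 _ _ _ _)).
    + apply: measurable_funD => //; apply: measurable_funM => //.
    + apply: measurable_funD => //; apply: measurable_funM => //.
    + move=> x; rewrite indicE; case: (x \in E) => /=.
      * rewrite mulr1 (_ : _ + _ = -1)%R; last ring.
        by rewrite normrN1 powR1 mulr1 lerDr powR_ge0.
      * by rewrite !mulr0 !addr0 ger0_norm // ltW.
    + by rewrite int_lin // muTE muE -!EFinM -EFinD.
    rewrite lee_fin.
    have H1 : (α `^ qr * M <= (c + 1) / 2)%R.
      have aγ : (α <= γ * (A / M))%R.
        rewrite mulrA ler_pdivlMr // /α mulrAC ler_pdivrMr ?subr_gt0 //; nra.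
      have g0 : (0 <= γ)%R by rewrite ltW // (lt_trans ltr01).
      have am0 : (0 <= A / M)%R by rewrite divr_ge0 // ltW.
      rewrite -γq -[X in (_ <= X)%R]mulr1 -AMq mulrA -powRM //.
      apply: ler_wpM2r; first exact: ltW.
      apply: ge0_ler_powR => //; rewrite ?nnegrE.
      - exact: ltW.
      - exact: ltW.
      - exact: mulr_ge0.
    have H : (α `^ qr * M + 1 * m <= c)%R by lra.
    apply: le_trans (ge0_ler_powR _ _ _ H) _.
    * by rewrite invr_ge0 ltW.
    * rewrite nnegrE mul1r addr_ge0 //; last exact: ltW.
      by rewrite mulr_ge0 // ?powR_ge0 // ltW.
    * by rewrite nnegrE; apply: ltW; apply: lt_trans c1.
    * have e0' : (0 <= eps)%R by apply: ltW; apply: lt_trans eps1.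
      by rewrite /c -powRrM mulfV ?gt_eqF // powRr1.
case: key => δ δ0 Hδ.
have : (r_mu mu < δ%:E)%E by apply: le_lt_trans r0 _; rewrite lte_fin.
case/ereal_inf_lt => _ [E [mE muE0] <-] muEδ.
have Efin : mu E \is a fin_num by exact: fin_num_measure.
set m := fine (mu E).
have muEE : mu E = m%:E by rewrite fineK.
have m0 : (0 < m)%R by rewrite -lte_fin -muEE.
have mδ : (m < δ)%R by rewrite -lte_fin -muEE.
have [mM Hn] := Hδ m m0 mδ.
set α := (A + m) / (M - m).
set f := fun x => α + (- (α + 1)) * \1_E x.
have mf : measurable_fun setT f.
  apply: measurable_funD => //; apply: measurable_funM => //.
have Sf : S_eps mu p eps f.
  split.
  - split => //; apply: le_lt_trans (Hn E mE muEE) _; exact: ltry.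
  - exact: Hn E mE muEE.
  - rewrite int_lin // muTE muEE -!EFinM -EFinD; congr EFin.
    rewrite /α.
    rewrite -/M -/A; field.
    by rewrite subr_eq0 gt_eqF.
have Pg : Lp_plus mu p (\1_E).
  split; [split|].
  - exact: measurable_indic.
  - apply: (le_lt_trans (@Lnorm_le _ _ _ mu p _ (cst 1%R) M _ _ _ _ _)); last exact: ltry.
    + by apply: lt_le_trans p1.
    + exact: measurable_indic.
    + exact: measurable_cst.
    + move=> x; rewrite indicE; case: (x \in E) => /=.
        by rewrite normr1 powR1.
      by rewrite normr0 powR0 // gt_eqF // (lt_le_trans ltr01).
    + rewrite (_ : (fun x => _) = cst 1%E); last by apply/funext.
      rewrite integral_cst //.
      by rewrite mul1e; exact: muTE.
  - by apply: aeW => x; rewrite indicE; case: (x \in E).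
have [_ /(_ f Sf)] := Hsub _ Pg.
rewrite (_ : (fun x => _) = (fun x => (0 + (-1) * \1_E x)%:E)); last first.
  apply/funext => x; rewrite /f indicE; case: (x \in E) => /=; congr EFin; ring.
rewrite int_lin // muEE mul0e add0e -EFinM lee_fin.
by rewrite mulN1r oppr_ge0 leNgt m0.
Qed.
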